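(* Let $f_1,f_2:\mathbb R^d\to\mathbb R$ be convex with $\nabla f_i$ globally Lipschitz continuous with modulus $L_i>0$ ($i=1,2$), let $f_3:\mathbb R^d\to\mathbb R\cup\{+\infty\}$ be proper and lower semicontinuous, and assume $\varphi:=f_1+f_2+f_3$ has a nonempty set of minimizers. Let $\alpha,\gamma,\lambda>0$ and let $(x_1^k,x_2^k,x_3^k)_k$, $(z_1^k,z_2^k)_k$ be sequences generated by the relaxed Ryu splitting method. Writing $\Delta x_i^k=x_i^{k+1}-x_i^k$ and $\Delta g_i^k=\nabla f_i(x_i^{k+1})-\nabla f_i(x_i^k)$ for $i=1,2$, for all $k\ge0$: $$\sum_{i=1}^2\Big[f_i(x_i^k)-f_i(x_i^{k+1})-\langle\nabla f_i(x_i^{k+1}),x_3^k-x_i^{k+1}\rangle+\langle\nabla f_i(x_i^k),x_3^k-x_i^k\rangle\Big]$$ $$\ge\sum_{i=1}^2\Big(\frac{1}{2L_i}-\frac{\gamma}{\lambda}\Big)\|\Delta g_i^k\|^2-\frac{1}{\lambda}\langle\Delta g_1^k,\Delta x_1^k\rangle-\frac{\alpha}{\lambda}\langle\Delta g_2^k,\Delta x_2^k\rangle+\frac{\alpha}{\lambda}\langle\Delta g_2^k,\Delta x_1^k\rangle.$$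
   Context: For $h:\mathbb R^d\to\mathbb R\cup\{+\infty\}$ and $\gamma>0$, $\mathrm{prox}_{\gamma h}(z):=\operatorname{argmin}_{y}\{h(y)+\frac{1}{2\gamma}\|y-z\|^2\}$. The relaxed Ryu splitting method: given $z_1^0,z_2^0\in\mathbb R^d$, for $k\ge0$, $x_1^k=\mathrm{prox}_{\gamma f_1}(z_1^k)$, $x_2^k=\mathrm{prox}_{\frac{\gamma}{\alpha}f_2}(\frac{z_2^k}{\alpha}+x_1^k)$, $x_3^k\in\mathrm{prox}_{\gamma f_3}(x_1^k-z_1^k+x_2^k-z_2^k)$, $z_1^{k+1}=z_1^k+\lambda(x_3^k-x_1^k)$, $z_2^{k+1}=z_2^k+\lambda(x_3^k-x_2^k)$. *)

(* Defs.v *)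
From HB Require Import structures.
From mathcomp Require Import all_boot all_order all_algebra.
From mathcomp Require Import all_classical all_reals all_analysis.
Set Implicit Arguments. Unset Strict Implicit. Unset Printing Implicit Defensive.
Import Order.TTheory GRing.Theory Num.Theory.
Import numFieldNormedType.Exports.
Local Open Scope ring_scope.

Definition dotv (R : realType) (d : nat) (u v : 'rV[R]_d) : R :=
  \sum_(j < d) u ord0 j * v ord0 j.

Definition sqn (R : realType) (d : nat) (u : 'rV[R]_d) : R := dotv u u.

Definition enorm (R : realType) (d : nat) (u : 'rV[R]_d) : R := Num.sqrt (sqn u).

Definition convex_fun (R : realType) (d : nat) (f : 'rV[R]_d -> R) : Prop :=
  forall (x y : 'rV[R]_d) (t : R), 0 <= t -> t <= 1 ->
    f (t *: x + (1 - t) *: y) <= t * f x + (1 - t) * f y.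

Definition is_gradient (R : realType) (d : nat)
    (f : 'rV[R]_d -> R^o) (g : 'rV[R]_d -> 'rV[R]_d) : Prop :=
  forall x, differentiable f x /\ forall h, 'd f x h = dotv (g x) h.

Definition lipschitz_with (R : realType) (d : nat) (L : R)
    (g : 'rV[R]_d -> 'rV[R]_d) : Prop :=
  forall x y, enorm (g x - g y) <= L * enorm (x - y).

Definition proper_fun (R : realType) (d : nat) (h : 'rV[R]_d -> \bar R) : Prop :=
  (forall x, h x != -oo%E) /\ (exists x, h x != +oo%E).

Definition is_minimizer (R : realType) (d : nat) (h : 'rV[R]_d -> \bar R)
    (y : 'rV[R]_d) : Prop := forall w, (h y <= h w)%E.

(* y \in prox_{gam h}(z) = argmin_w { h w + 1/(2 gam) ||w - z||^2 } *)
Definition in_prox (R : realType) (d : nat) (gam : R) (h : 'rV[R]_d -> \bar R)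
    (z y : 'rV[R]_d) : Prop :=
  is_minimizer (fun w => (h w + ((2 * gam)^-1 * sqn (w - z))%:E)%E) y.

Definition ext (R : realType) (d : nat) (f : 'rV[R]_d -> R) : 'rV[R]_d -> \bar R :=
  fun x => (f x)%:E.

Definition ryu_seq (R : realType) (d : nat)
    (f1 f2 : 'rV[R]_d -> R) (f3 : 'rV[R]_d -> \bar R) (alpha gam lam : R)
    (x1 x2 x3 z1 z2 : nat -> 'rV[R]_d) : Prop :=
  forall k,
    [/\ in_prox gam (ext f1) (z1 k) (x1 k),
        in_prox (gam / alpha) (ext f2) (alpha^-1 *: z2 k + x1 k) (x2 k),
        in_prox gam f3 (x1 k - z1 k + x2 k - z2 k) (x3 k),
        z1 k.+1 = z1 k + lam *: (x3 k - x1 k) &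
        z2 k.+1 = z2 k + lam *: (x3 k - x2 k)].

(* Main.v *)
Require Import Defs.
From HB Require Import structures.
From mathcomp Require Import all_boot all_order all_algebra.
From mathcomp Require Import all_classical all_reals all_analysis.
From mathcomp Require Import ring lra.
Import Order.TTheory GRing.Theory Num.Theory.
Import numFieldNormedType.Exports.
Local Open Scope ring_scope.
Set Implicit Arguments. Unset Strict Implicit.

Lemma dotvC (R : realType) d (a b : 'rV[R]_d) : dotv a b = dotv b a.
Proof. by apply: eq_bigr => i _; rewrite mulrC. Qed.
Lemma dotvDl (R : realType) d (a b c : 'rV[R]_d) : dotv (a + b) c = dotv a c + dotv b c.
Proof. by rewrite /dotv -big_split; apply: eq_bigr => i _; rewrite !mxE mulrDl. Qed.
Lemma dotvNl (R : realType) d (a c : 'rV[R]_d) : dotv (- a) c = - dotv a c.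
Proof. by rewrite /dotv -sumrN; apply: eq_bigr => i _; rewrite !mxE mulNr. Qed.
Lemma dotvZl (R : realType) d (k : R) (a c : 'rV[R]_d) : dotv (k *: a) c = k * dotv a c.
Proof. by rewrite /dotv mulr_sumr; apply: eq_bigr => i _; rewrite !mxE mulrA. Qed.
Lemma dotvBl (R : realType) d (a b c : 'rV[R]_d) : dotv (a - b) c = dotv a c - dotv b c.
Proof. by rewrite dotvDl dotvNl. Qed.
Lemma dotvDr (R : realType) d (a b c : 'rV[R]_d) : dotv c (a + b) = dotv c a + dotv c b.
Proof. by rewrite !(dotvC c) dotvDl. Qed.
Lemma dotvBr (R : realType) d (a b c : 'rV[R]_d) : dotv c (a - b) = dotv c a - dotv c b.
Proof. by rewrite !(dotvC c) dotvBl. Qed.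
Lemma dotvZr (R : realType) d (k : R) (a c : 'rV[R]_d) : dotv c (k *: a) = k * dotv c a.
Proof. by rewrite !(dotvC c) dotvZl. Qed.

Lemma sqn_ge0 (R : realType) d (u : 'rV[R]_d) : 0 <= sqn u.
Proof. by apply: sumr_ge0 => i _; rewrite -expr2 sqr_ge0. Qed.

Lemma sqn_le0 (R : realType) d (u : 'rV[R]_d) : sqn u <= 0 -> u = 0.
Proof.
move=> H.
have h : sqn u = 0 by apply/eqP; rewrite eq_le H sqn_ge0.
have := psumr_eq0P (fun i _ => (_ : 0 <= u ord0 i * u ord0 i)) h.
move=> /(_ (fun i => ltac:(rewrite -expr2; exact: sqr_ge0))) H2.
apply/rowP => j; rewrite mxE.
by have /eqP := H2 j isT; rewrite mulf_eq0 orbb => /eqP.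
Qed.

Lemma sqnZ (R : realType) d (k : R) (u : 'rV[R]_d) : sqn (k *: u) = k ^+ 2 * sqn u.
Proof. by rewrite /sqn dotvZl dotvZr mulrA expr2. Qed.

Lemma sqnD (R : realType) d (u v : 'rV[R]_d) : sqn (u + v) = sqn u + 2 * dotv u v + sqn v.
Proof. rewrite /sqn dotvDl !dotvDr (dotvC v u); ring. Qed.

Lemma enorm_sq (R : realType) d (a b : 'rV[R]_d) (L : R) : 0 <= L ->
  enorm a <= L * enorm b -> sqn a <= L ^+ 2 * sqn b.
Proof.
rewrite /enorm => L0 H.
have := ler_pM (sqrtr_ge0 _) (sqrtr_ge0 _) H H.
rewrite -expr2 sqr_sqrtr ?sqn_ge0 // mulrACA -!expr2 sqr_sqrtr ?sqn_ge0 //.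
Qed.

Lemma small_t (R : realType) (a C : R) : 0 <= C ->
  (forall t, 0 < t -> t <= 1 -> a <= t * C) -> a <= 0.
Proof.
move=> C0 H; case: (lerP a 0) => // a0.
have aC : 0 < a + C by lra.
have t0 : 0 < a / (a + C) by apply: divr_gt0.
have t1 : a / (a + C) <= 1 by rewrite ler_pdivrMr // mul1r; lra.
have := H _ t0 t1.
rewrite mulrAC ler_pdivlMr // => h.
have : a * a <= 0 by nra.
nra.
Qed.
Lemma line_derive (R : realType) (d : nat) (f : 'rV[R]_d -> R^o) g x h (t : R) :
  is_gradient f g ->
  is_derive t 1 (fun s : R => f (x + s *: h)) (dotv (g (x + t *: h)) h).
Proof.
move=> Hg.
have [df dfE] := Hg (x + t *: h).
pose l := fun s : R => x + s *: h.
have hl : is_diff t l ( *:%R ^~ h).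
  have -> : ( *:%R ^~ h) = (0 : R -> 'rV[R]_d) + ( *:%R ^~ h).
    by apply/funext => s; rewrite /= add0r.
  rewrite /l; apply: is_diffD.
have dl : differentiable l t := @ex_diff _ _ _ _ _ _ _ hl.
have dc : differentiable (f \o l) t by apply: differentiable_comp.
apply: DeriveDef; first exact/diff_derivable.
rewrite deriveE // diff_comp // diff_val /= scale1r dfE //.
Qed.

Lemma lip_dot (R : realType) d (g : 'rV[R]_d -> 'rV[R]_d) (L : R) x h (c s : R) :
  lipschitz_with L g -> 0 < L -> 0 < c -> s ^+ 2 = 1 ->
  s * dotv (g (x + c *: h) - g x) h <= L * c * sqn h.
Proof.
move=> Hl L0 c0 s2.
set u := g (x + c *: h) - g x.
have Hu : sqn u <= L ^+ 2 * (c ^+ 2 * sqn h).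
  rewrite -sqnZ; apply: enorm_sq; first exact: ltW.
  by have := Hl (x + c *: h) x; rewrite addrAC subrr add0r.
have H0 := sqn_ge0 (u + (- (s * L * c)) *: h).
rewrite sqnD sqnZ dotvZr sqrrN !exprMn s2 mul1r in H0.
have P0 : 0 < L * c by apply: mulr_gt0.
have : (2 * (L * c)) * (s * dotv u h) <= (2 * (L * c)) * (L * c * sqn h).
  have e1 : (2 * (L * c)) * (s * dotv u h) = - (2 * - (s * L * c) * dotv u h) by ring.
  have e2 : (2 * (L * c)) * (L * c * sqn h) = L ^+ 2 * (c ^+ 2 * sqn h) + L ^+ 2 * c ^+ 2 * sqn h by ring.
  rewrite e1 e2; lra.
by rewrite ler_pM2l // mulr_gt0.
Qed.

Lemma descent (R : realType) d (f : 'rV[R]_d -> R^o) g (L : R) x h (s : R) :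
  is_gradient f g -> lipschitz_with L g -> 0 < L -> s ^+ 2 = 1 ->
  s * (f (x + h) - f x - dotv (g x) h) <= L / 2 * sqn h.
Proof.
move=> Hg Hl L0 s2.
pose phi := fun t : R => f (x + t *: h).
set D := dotv (g x) h; set S := sqn h.
pose psi := s *: phi - (s * D) *: id - (L / 2 * S) *: (id * id).
have dpsi (t : R) : is_derive t 1 psi (s * dotv (g (x + t *: h)) h - s * D - L / 2 * S * (t + t)).
  have := line_derive x h t Hg => dphi.
  apply: is_derive_eq.
  by rewrite /GRing.scale /= !mulr1.
have [c c01 Hc] := MVT ltr01 (fun t _ => dpsi t)
  (derivable_within_continuous (fun t _ => @ex_derive _ _ _ _ _ _ _ (dpsi t))).
move: c01; rewrite in_itv /= => /andP[c0 c1].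
have Hd := lip_dot x h Hl L0 c0 s2.
rewrite dotvBl in Hd.
have ev (t : R) : psi t = s * f (x + t *: h) - s * D * t - L / 2 * S * (t * t) by [].
move: Hc; rewrite !ev scale1r scale0r addr0 subr0 mulr1 => Hc.
have : L / 2 * S * (c + c) = L * c * S by field.
rewrite -/D -/S in Hd *.
move=> e; rewrite e in Hc.
have : s * (f (x + h) - f x - D) - L / 2 * S = s * dotv (g (x + c *: h)) h - s * D - L * c * S by lra.
lra.
Qed.

Lemma fo_convex (R : realType) d (f : 'rV[R]_d -> R^o) g (L : R) y z :
  convex_fun f -> is_gradient f g -> lipschitz_with L g -> 0 < L ->
  f y + dotv (g y) (z - y) <= f z.
Proof.
move=> Hc Hg Hl L0.
set h := z - y.
suff : dotv (g y) h - (f z - f y) <= 0 by lra.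
apply: (@small_t _ _ (L / 2 * sqn h)).
  by apply: mulr_ge0; [lra | exact: sqn_ge0].
move=> t t0 t1.
have Hd := @descent _ _ _ _ _ y (t *: h) (-1) Hg Hl L0 (ltac:(by rewrite sqrrN expr1n)).
have e : y + t *: h = t *: z + (1 - t) *: y.
  by apply/rowP => i; rewrite /h !mxE; ring.
have Hcv := Hc z y t (ltW t0) t1.
rewrite -e in Hcv.
rewrite dotvZr sqnZ in Hd.
have : t * (dotv (g y) h - (f z - f y)) <= t * (t * (L / 2 * sqn h)).
  have e2 : t * (t * (L / 2 * sqn h)) = L / 2 * (t ^+ 2 * sqn h) by ring.
  rewrite e2; lra.
by rewrite ler_pM2l.
Qed.

Lemma coco (R : realType) d (f : 'rV[R]_d -> R^o) g (L : R) x y :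
  convex_fun f -> is_gradient f g -> lipschitz_with L g -> 0 < L ->
  (2 * L)^-1 * sqn (g x - g y) <= f x - f y - dotv (g y) (x - y).
Proof.
move=> Hc Hg Hl L0.
set u := g x - g y.
set h := (- L^-1) *: u.
set z := x + h.
have H1 := fo_convex y z Hc Hg Hl L0.
have H2 := @descent _ _ _ _ _ x h 1 Hg Hl L0 (expr1n _ _).
rewrite mul1r -/z in H2.
have e1 : dotv (g y) (z - y) = dotv (g y) (x - y) - L^-1 * dotv (g y) u.
  have -> : z - y = (x - y) + h by rewrite /z addrAC.
  by rewrite dotvDr /h dotvZr mulNr.
have e2 : dotv (g x) h = - L^-1 * dotv (g x) u by rewrite dotvZr.
have e3 : L / 2 * sqn h = (2 * L)^-1 * sqn u.
  rewrite /h sqnZ sqrrN mulrA; congr (_ * _); field; lra.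
have e4 : L^-1 * dotv (g x) u - L^-1 * dotv (g y) u = L^-1 * sqn u.
  by rewrite -mulrBr -dotvBl.
have e5 : L^-1 * sqn u = (2 * L)^-1 * sqn u + (2 * L)^-1 * sqn u.
  by rewrite -mulrDl; congr (_ * _); field; lra.
rewrite e1 in H1; rewrite e2 e3 in H2.
lra.
Qed.

Lemma prox_opt (R : realType) d (f : 'rV[R]_d -> R^o) g (L gam : R) z x :
  is_gradient f g -> lipschitz_with L g -> 0 < L -> 0 < gam ->
  in_prox gam (ext f) z x -> g x + gam^-1 *: (x - z) = 0.
Proof.
move=> Hg Hl L0 g0 Hp.
set v := g x + gam^-1 *: (x - z).
set c := (2 * gam)^-1.
apply: sqn_le0.
have c0 : 0 <= c by rewrite /c invr_ge0; lra.
apply: (@small_t _ _ ((L / 2 + c) * sqn v)).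
  by apply: mulr_ge0; [lra | exact: sqn_ge0].
move=> t t0 t1.
set w := x + (- t) *: v.
have Hm := Hp w; rewrite /ext -!EFinD lee_fin in Hm.
have Hd := @descent _ _ _ _ _ x ((- t) *: v) 1 Hg Hl L0 (expr1n _ _).
rewrite mul1r -/w (dotvZr (- t) v (g x)) (sqnZ (- t) v) sqrrN in Hd.
have ew : w - z = (x - z) + (- t) *: v by rewrite /w addrAC.
rewrite ew (sqnD (x - z)) dotvZr sqnZ sqrrN in Hm.
have ev : dotv (g x) v + 2 * c * dotv (x - z) v = sqn v.
  have -> : sqn v = dotv (g x + gam^-1 *: (x - z)) v by [].
  rewrite [RHS]dotvDl [in RHS]dotvZl; congr (_ + _); congr (_ * _).
  by rewrite /c; field; lra.
have : t * sqn v <= t * (t * ((L / 2 + c) * sqn v)).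
  have e2 : t * (t * ((L / 2 + c) * sqn v)) = L / 2 * (t ^+ 2 * sqn v) + c * (t ^+ 2 * sqn v) by ring.
  rewrite e2 -{1}ev; rewrite -/c in Hm; lra.
by rewrite (ler_pM2l t0).
Qed.

Lemma sqn_sym (R : realType) d (a b : 'rV[R]_d) : sqn (a - b) = sqn (b - a).
Proof. by rewrite /sqn /dotv; apply: eq_bigr => j _; rewrite !mxE; ring. Qed.

Lemma solve_z (R : realType) (gam G Y Z : R) : gam != 0 ->
  G + gam^-1 * (Y - Z) = 0 -> Z = Y + gam * G.
Proof.
move=> g0 e.
have : gam * G + Y - Z = gam * (G + gam^-1 * (Y - Z)) by field.
rewrite e mulr0; lra.
Qed.

Lemma solve_z2 (R : realType) (gam alpha G W Z Y : R) : gam != 0 -> alpha != 0 ->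
  G + (gam / alpha)^-1 * (W - (alpha^-1 * Z + Y)) = 0 ->
  Z = gam * G + alpha * W - alpha * Y.
Proof.
rewrite invf_div => g0 a0 e.
have : gam * G + alpha * W - alpha * Y - Z =
  gam * (G + (alpha / gam) * (W - (alpha^-1 * Z + Y))).
  by field; rewrite g0 a0.
rewrite e mulr0; lra.
Qed.

Lemma solve_x (R : realType) (lam X Y Z Z' : R) : lam != 0 ->
  Z' = Z + lam * (X - Y) -> X = Y + lam^-1 * (Z' - Z).
Proof. by move=> l0 ->; field. Qed.

Unset Implicit Arguments.

Theorem lemma4 (R : realType) (d : nat)
    (f1 f2 : 'rV[R]_d -> R^o) (g1 g2 : 'rV[R]_d -> 'rV[R]_d)
    (f3 : 'rV[R]_d -> \bar R) (L1 L2 alpha gam lam : R)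
    (x1 x2 x3 z1 z2 : nat -> 'rV[R]_d) :
  convex_fun f1 -> convex_fun f2 ->
  is_gradient f1 g1 -> is_gradient f2 g2 ->
  0 < L1 -> 0 < L2 -> lipschitz_with L1 g1 -> lipschitz_with L2 g2 ->
  proper_fun f3 -> lower_semicontinuous f3 ->
  (exists xs, is_minimizer (fun x => ((f1 x + f2 x)%:E + f3 x)%E) xs) ->
  0 < alpha -> 0 < gam -> 0 < lam ->
  ryu_seq f1 f2 f3 alpha gam lam x1 x2 x3 z1 z2 ->
  forall k : nat,
    let dx1 := x1 k.+1 - x1 k in
    let dx2 := x2 k.+1 - x2 k in
    let dg1 := g1 (x1 k.+1) - g1 (x1 k) in
    let dg2 := g2 (x2 k.+1) - g2 (x2 k) in
    (f1 (x1 k) - f1 (x1 k.+1) - dotv (g1 (x1 k.+1)) (x3 k - x1 k.+1)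
       + dotv (g1 (x1 k)) (x3 k - x1 k))
    + (f2 (x2 k) - f2 (x2 k.+1) - dotv (g2 (x2 k.+1)) (x3 k - x2 k.+1)
       + dotv (g2 (x2 k)) (x3 k - x2 k))
    >= ((2 * L1)^-1 - gam / lam) * sqn dg1 + ((2 * L2)^-1 - gam / lam) * sqn dg2
       - lam^-1 * dotv dg1 dx1 - alpha / lam * dotv dg2 dx2
       + alpha / lam * dotv dg2 dx1.
Proof.
move=> cf1 cf2 gr1 gr2 L10 L20 lp1 lp2 _ _ _ a0 g0 l0 Hr k.
cbv zeta.
have g0' : gam != 0 by rewrite gt_eqF.
have a0' : alpha != 0 by rewrite gt_eqF.
have l0' : lam != 0 by rewrite gt_eqF.
have O1 j : g1 (x1 j) + gam^-1 *: (x1 j - z1 j) = 0.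
  by have [P _ _ _ _] := Hr j; exact: (prox_opt gr1 lp1 L10 g0 P).
have ga0 : 0 < gam / alpha by apply: divr_gt0.
have O2 j : g2 (x2 j) + (gam / alpha)^-1 *: (x2 j - (alpha^-1 *: z2 j + x1 j)) = 0.
  by have [_ P _ _ _] := Hr j; exact: (prox_opt gr2 lp2 L20 ga0 P).
have [_ _ _ U1 U2] := Hr k.
have C1 := coco (x1 k) (x1 k.+1) cf1 gr1 lp1 L10.
have C2 := coco (x2 k) (x2 k.+1) cf2 gr2 lp2 L20.
rewrite sqn_sym in C1; rewrite sqn_sym in C2.
have F1 : dotv (g1 (x1 k.+1)) (x3 k - x1 k.+1) - dotv (g1 (x1 k)) (x3 k - x1 k) =
  dotv (g1 (x1 k.+1)) (x1 k - x1 k.+1) +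
  (lam^-1 * dotv (g1 (x1 k.+1) - g1 (x1 k)) (x1 k.+1 - x1 k)
   + gam / lam * sqn (g1 (x1 k.+1) - g1 (x1 k))).
  rewrite /sqn /dotv !mulr_sumr -!sumrB -!big_split /=; apply: eq_bigr => j _.
  have e1 := congr1 (fun M : 'rV[R]_d => M ord0 j) (O1 k).
  have e2 := congr1 (fun M : 'rV[R]_d => M ord0 j) (O1 k.+1).
  have e3 := congr1 (fun M : 'rV[R]_d => M ord0 j) U1.
  move: e1 e2 e3; rewrite !mxE => e1 e2 e3.
  have hz0 := solve_z g0' e1; have hz1 := solve_z g0' e2.
  rewrite hz0 hz1 in e3.
  rewrite (solve_x l0' e3); field; rewrite ?l0' ?g0' ?a0' //=.
have F2 : dotv (g2 (x2 k.+1)) (x3 k - x2 k.+1) - dotv (g2 (x2 k)) (x3 k - x2 k) =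
  dotv (g2 (x2 k.+1)) (x2 k - x2 k.+1) +
  (gam / lam * sqn (g2 (x2 k.+1) - g2 (x2 k))
   - alpha / lam * dotv (g2 (x2 k.+1) - g2 (x2 k)) (x1 k.+1 - x1 k)
   + alpha / lam * dotv (g2 (x2 k.+1) - g2 (x2 k)) (x2 k.+1 - x2 k)).
  rewrite /sqn /dotv !mulr_sumr -!sumrB -!big_split /=; apply: eq_bigr => j _.
  have e1 := congr1 (fun M : 'rV[R]_d => M ord0 j) (O2 k).
  have e2 := congr1 (fun M : 'rV[R]_d => M ord0 j) (O2 k.+1).
  have e3 := congr1 (fun M : 'rV[R]_d => M ord0 j) U2.
  move: e1 e2 e3; rewrite !mxE => e1 e2 e3.
  have hz0 := solve_z2 g0' a0' e1; have hz1 := solve_z2 g0' a0' e2.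
  rewrite hz0 hz1 in e3.
  rewrite (solve_x l0' e3); field; rewrite ?l0' ?g0' ?a0' //=.
lra.
Qed.
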